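(* Let $\mathbf L=(L,\vee,\wedge,{}',0,1)$ be a bounded lattice with complementation $'$. Then the following are equivalent: (a) for all $x,y,z\in L$, $x\odot y\le z$ implies $x\le y\to z$; (b) $\mathbf L$ satisfies the identity $x\vee y'\approx y'\vee\big((x\vee y')\wedge y\big)$; (c) for all $x,y\in L$, $x'\le y$ implies $y=x'\vee(y\wedge x)$. Furthermore, the following are equivalent: (d) for all $x,y,z\in L$, $x\le y\to z$ implies $x\odot y\le z$; (e) $\mathbf L$ satisfies the identity $x\wedge y\approx x\wedge\big((x\wedge y)\vee x'\big)$; (f) for all $x,y\in L$, $x\le y$ implies $x=(y'\vee x)\wedge y$.
   Context: A complementation on a bounded lattice is a unary operation $'$ with $x\vee x'=1$ and $x\wedge x'=0$ for all $x$ (no involutivity or antitonicity is assumed). The Sasaki operations are $x\odot y=(x\vee y')\wedge y$ and $x\to y=x'\vee(x\wedge y)$. *)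

(* Defs.v *)
From HB Require Import structures.
From mathcomp Require Import all_boot all_order.
Set Implicit Arguments. Unset Strict Implicit. Unset Printing Implicit Defensive.
Import Order.LTheory.
Local Open Scope order_scope.

Definition complementation (d : Order.disp_t) (L : tbLatticeType d) (c : L -> L) : Prop :=
  forall x : L, x `|` c x = \top /\ x `&` c x = \bot.

Definition sasaki_prod (d : Order.disp_t) (L : tbLatticeType d) (c : L -> L) (x y : L) : L :=
  (x `|` c y) `&` y.
Definition sasaki_impl (d : Order.disp_t) (L : tbLatticeType d) (c : L -> L) (x y : L) : L :=
  c x `|` (x `&` y).

(* Main.v *)
Require Import Defs.
From mathcomp Require Import all_boot all_order.
Import Order.LTheory.
Local Open Scope order_scope.

Theorem theorem1 (d : Order.disp_t) (L : tbLatticeType d) (c : L -> L)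
  (hc : complementation c) :
  ((forall x y z : L, sasaki_prod c x y <= z -> x <= sasaki_impl c y z) <->
   (forall x y : L, x `|` c y = c y `|` ((x `|` c y) `&` y))) /\
  ((forall x y : L, x `|` c y = c y `|` ((x `|` c y) `&` y)) <->
   (forall x y : L, c x <= y -> y = c x `|` (y `&` x))) /\
  ((forall x y z : L, x <= sasaki_impl c y z -> sasaki_prod c x y <= z) <->
   (forall x y : L, x `&` y = x `&` ((x `&` y) `|` c x))) /\
  ((forall x y : L, x `&` y = x `&` ((x `&` y) `|` c x)) <->
   (forall x y : L, x <= y -> x = (c y `|` x) `&` y)).
Proof.
rewrite /sasaki_prod /sasaki_impl.
split; [split|split; [split|split; split]].
- move=> H x y; apply/le_anti/andP; split.
    rewrite leUx leUl andbT.
    have := H x y ((x `|` c y) `&` y) (lexx _).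
    by rewrite (meet_r (leIr _ _)).
  by rewrite leUx leUr leIl.
- move=> H x y z hz; apply: (le_trans (leUl x (c y))).
  rewrite H; apply: leU2 => //; rewrite lexI leIr /=; exact: hz.
- move=> H x y hxy; have := H y x; rewrite (join_l hxy); exact.
- move=> H x y; have := H y (x `|` c y) (leUr _ _) => {1}->.
  by rewrite meetC.
- move=> H x y; apply/le_anti/andP; split.
    by rewrite lexI leIl /= leUl.
  set w := x `&` ((x `&` y) `|` c x).
  have h1 : w <= c x `|` (x `&` (x `&` y)).
    by rewrite meetA meetxx joinC leIr.
  have h2 := H w x (x `&` y) h1.
  have h3 : w <= (w `|` c x) `&` x by rewrite lexI leUl /w leIl.
  exact: (@le_trans _ _ _ _ _ h3 h2).
- move=> H x y z hx.
  have h1 : (x `|` c y) `&` y <= (c y `|` (y `&` z)) `&` y.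
    by apply: leI2 => //; rewrite leUx hx leUl.
  have h2 : (c y `|` (y `&` z)) `&` y = y `&` z by rewrite joinC meetC -H.
  rewrite h2 in h1; exact: (@le_trans _ _ (y `&` z) _ _ h1 (leIr z y)).
- move=> H x y hxy; have := H y x; rewrite (meet_r hxy) => {1}->.
  by rewrite meetC joinC.
- move=> H x y; rewrite {1}(H (x `&` y) x (leIl _ _)).
  by rewrite meetC joinC.
Qed.
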